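(* Let $G$ be a countable group, and identify the power set $\mathbf{P}_G$ with $\{0,1\}^G$ (via characteristic functions) carrying the product topology. Then, as subsets of $\mathbf{P}_G$: the family $\mathbf{L}_G$ of large subsets is $F_\sigma$; the family $\mathbf{T}_G$ of thick subsets is $G_\delta$; the family $\mathbf{PT}_G$ of prethick subsets is $G_{\delta\sigma}$; and the families $\mathbf{S}_G$ of small subsets and $\mathbf{EL}_G$ of extralarge subsets are $F_{\sigma\delta}$.
   Context: Let $G$ be a group and $\mathcal{F}_G$ the family of finite subsets of $G$. A subset $A\subseteq G$ is large if $G=FA$ for some $F\in\mathcal{F}_G$; small if $L\setminus A$ is large for every large $L\subseteq G$; extralarge if $G\setminus A$ is small; thick if for every $F\in\mathcal{F}_G$ there is $a\in A$ with $Fa\subseteq A$; prethick if $FA$ is thick for some $F\in\mathcal{F}_G$. The topology on $\mathbf{P}_G$ has as subbase the sets $\{X: K\subseteq X\}$ and $\{X: X\cap K=\emptyset\}$ for finite $K\subseteq G$. *)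

(* Defs.v *)
From Stdlib Require Import List Classical.
Import ListNotations.

Record is_group (G : Type) (mul : G -> G -> G) (e : G) (inv : G -> G) : Prop := {
  grp_assoc : forall x y z, mul x (mul y z) = mul (mul x y) z;
  grp_idl : forall x, mul e x = x;
  grp_idr : forall x, mul x e = x;
  grp_invl : forall x, mul (inv x) x = e;
  grp_invr : forall x, mul x (inv x) = e }.

Arguments is_group {G} mul e inv.

Definition countable (G : Type) : Prop :=
  exists f : G -> nat, forall x y, f x = f y -> x = y.

Section Sizes.
Variables (G : Type) (mul : G -> G -> G).

(* finite subsets of G are represented by lists *)
Definition setmul (F : list G) (A : G -> Prop) : G -> Prop :=
  fun g => exists f a, In f F /\ A a /\ g = mul f a.

Definition large (A : G -> Prop) : Prop :=
  exists F : list G, forall g, setmul F A g.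

Definition small (A : G -> Prop) : Prop :=
  forall L : G -> Prop, large L -> large (fun g => L g /\ ~ A g).

Definition extralarge (A : G -> Prop) : Prop :=
  small (fun g => ~ A g).

Definition thick (A : G -> Prop) : Prop :=
  forall F : list G, exists a, A a /\ forall f, In f F -> A (mul f a).

Definition prethick (A : G -> Prop) : Prop :=
  exists F : list G, thick (setmul F A).
End Sizes.
Arguments large {G} mul A.
Arguments small {G} mul A.
Arguments extralarge {G} mul A.
Arguments thick {G} mul A.
Arguments prethick {G} mul A.
Arguments setmul {G} mul F A _.

(* P_G identified with {0,1}^G = G -> bool, product topology.
   Subbase/base: cylinders { X | K_in ⊆ X, X ∩ K_out = ∅ }, K_in, K_out finite. *)
Section Topology.
Variable G : Type.

Definition cylinder (Kin Kout : list G) : (G -> bool) -> Prop :=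
  fun X => (forall g, In g Kin -> X g = true) /\ (forall g, In g Kout -> X g = false).

Definition is_open (U : (G -> bool) -> Prop) : Prop :=
  forall X, U X -> exists Kin Kout, cylinder Kin Kout X /\
    forall Y, cylinder Kin Kout Y -> U Y.

Definition is_closed (C : (G -> bool) -> Prop) : Prop :=
  is_open (fun X => ~ C X).

Definition F_sigma (S : (G -> bool) -> Prop) : Prop :=
  exists C : nat -> (G -> bool) -> Prop,
    (forall n, is_closed (C n)) /\ forall X, S X <-> exists n, C n X.

Definition G_delta (S : (G -> bool) -> Prop) : Prop :=
  exists U : nat -> (G -> bool) -> Prop,
    (forall n, is_open (U n)) /\ forall X, S X <-> forall n, U n X.

Definition G_delta_sigma (S : (G -> bool) -> Prop) : Prop :=
  exists D : nat -> (G -> bool) -> Prop,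
    (forall n, G_delta (D n)) /\ forall X, S X <-> exists n, D n X.

Definition F_sigma_delta (S : (G -> bool) -> Prop) : Prop :=
  exists D : nat -> (G -> bool) -> Prop,
    (forall n, F_sigma (D n)) /\ forall X, S X <-> forall n, D n X.
End Topology.
Arguments F_sigma {G} S.
Arguments G_delta {G} S.
Arguments G_delta_sigma {G} S.
Arguments F_sigma_delta {G} S.
Arguments is_open {G} U.
Arguments is_closed {G} C.

Definition setof {G : Type} (X : G -> bool) : G -> Prop := fun g => X g = true.

(* Main.v *)
Require Import Defs.
From Stdlib Require Import List Classical ClassicalEpsilon Lia Arith.
Import ListNotations.

Lemma setmul_mono {G} (mul : G->G->G) (F F' : list G) (A B : G -> Prop) :
  (forall x, In x F -> In x F') -> (forall x, A x -> B x) ->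
  forall g, setmul mul F A g -> setmul mul F' B g.
Proof. intros HF HA g (f & a & Hf & Ha & ->). exists f, a; auto. Qed.

Lemma thick_mono {G} mul (A B : G -> Prop) :
  (forall x, A x -> B x) -> thick mul A -> thick mul B.
Proof. intros H T F. destruct (T F) as (a & Ha & Hf). exists a; auto. Qed.

Lemma large_mono {G} mul (A B : G -> Prop) :
  (forall x, A x -> B x) -> large mul A -> large mul B.
Proof. intros H [F HF]. exists F. intro g. eapply setmul_mono; [| |apply HF]; auto. Qed.

Lemma list_choice {A B} (P : A -> B -> Prop) (L : list A) :
  (forall x, In x L -> exists y, P x y) ->
  exists W, (forall x, In x L -> exists y, In y W /\ P x y) /\
    (forall y, In y W -> exists x, In x L /\ P x y).
Proof.
  induction L as [|x L IH]; intros H.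
  - exists []; split; [intros _ []|intros _ []].
  - destruct (H x (or_introl eq_refl)) as [y Hy].
    destruct IH as [W [HW HW']]. { intros z Hz; apply H; right; auto. }
    exists (y :: W). split.
    + intros z [<-|Hz].
      * exists y; split; [left|]; auto.
      * destruct (HW z Hz) as (y' & ? & ?). exists y'; split; [right|]; auto.
    + intros z [<-|Hz].
      * exists x; split; [left|]; auto.
      * destruct (HW' z Hz) as (x' & ? & ?). exists x'; split; [right|]; auto.
Qed.

Definition Fk {G} (en : nat -> G) (k : nat) : list G := map en (seq 0 k).

Lemma Fk_cover {G} (en : nat -> G) (Hen : forall x, exists n, en n = x) (F : list G) :
  exists k, forall x, In x F -> In x (Fk en k).
Proof.
  induction F as [|x F [k Hk]].
  - exists 0; intros _ [].
  - destruct (Hen x) as [n Hn]. exists (S (Nat.max k n)).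
    intros y [<-|Hy]; unfold Fk; apply in_map_iff.
    + exists n; split; auto. apply in_seq; lia.
    + specialize (Hk y Hy). unfold Fk in Hk. apply in_map_iff in Hk.
      destruct Hk as (m & <- & Hm).
      apply in_seq in Hm. exists m; split; auto; apply in_seq; lia.
Qed.

Lemma large_iff {G} mul (en : nat -> G) (Hen : forall x, exists n, en n = x) A :
  large mul A <-> exists k, forall g, setmul mul (Fk en k) A g.
Proof.
  split.
  - intros [F HF]. destruct (Fk_cover en Hen F) as [k Hk]. exists k.
    intro g. eapply setmul_mono; [| |apply HF]; auto.
  - intros [k Hk]. exists (Fk en k); auto.
Qed.

Lemma thick_iff {G} mul (en : nat -> G) (Hen : forall x, exists n, en n = x) A :
  thick mul A <-> forall m, exists a, A a /\ forall f, In f (Fk en m) -> A (mul f a).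
Proof.
  split.
  - intros T m. apply T.
  - intros H F. destruct (Fk_cover en Hen F) as [k Hk].
    destruct (H k) as (a & Ha & Hf). exists a; auto.
Qed.

Lemma prethick_iff {G} mul (en : nat -> G) (Hen : forall x, exists n, en n = x) A :
  prethick mul A <-> exists k, thick mul (setmul mul (Fk en k) A).
Proof.
  split.
  - intros [F HF]. destruct (Fk_cover en Hen F) as [k Hk]. exists k.
    eapply thick_mono; [|apply HF]. apply setmul_mono; auto.
  - intros [k Hk]. exists (Fk en k); auto.
Qed.


Lemma cancel_l {G} (mul : G -> G -> G) e inv (HG : is_group mul e inv) f a :
  mul (inv f) (mul f a) = a.
Proof. rewrite (grp_assoc _ _ _ _ HG), (grp_invl _ _ _ _ HG), (grp_idl _ _ _ _ HG); auto. Qed.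

Lemma cancel_r {G} (mul : G -> G -> G) e inv (HG : is_group mul e inv) f a :
  mul f (mul (inv f) a) = a.
Proof. rewrite (grp_assoc _ _ _ _ HG), (grp_invr _ _ _ _ HG), (grp_idl _ _ _ _ HG); auto. Qed.

Lemma thick_not_large_compl {G} (mul : G -> G -> G) e inv (HG : is_group mul e inv) A :
  thick mul A -> ~ large mul (fun g => ~ A g).
Proof.
  intros T [K HK]. destruct (T (map inv K)) as (a & Ha & Hf).
  destruct (HK a) as (k & c & Hk & Hc & Ha').
  apply Hc. specialize (Hf (inv k) (in_map _ _ _ Hk)).
  rewrite Ha' in Hf. rewrite (cancel_l mul e inv HG) in Hf. exact Hf.
Qed.

Lemma not_large_thick_compl {G} (mul : G -> G -> G) e inv (HG : is_group mul e inv) B :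
  ~ large mul B -> thick mul (fun g => ~ B g).
Proof.
  intros Hnl. apply NNPP; intro Hnt. apply not_all_ex_not in Hnt as [F0 HF0].
  apply Hnl. exists (e :: map inv F0). intro g.
  destruct (classic (B g)) as [Hb|Hb].
  - exists e, g; split; [left; auto|split; auto]. rewrite (grp_idl _ _ _ _ HG); auto.
  - destruct (classic (exists f, In f F0 /\ B (mul f g))) as [(f & Hf & Hbf)|Hno].
    + exists (inv f), (mul f g). split; [right; apply in_map; auto|split; auto].
      rewrite (cancel_l mul e inv HG); auto.
    + exfalso. apply HF0. exists g. split; auto. intros f Hf Hbf. apply Hno; eauto.
Qed.

Lemma small_iff {G} (mul : G -> G -> G) e inv (HG : is_group mul e inv) A :
  small mul A <-> ~ prethick mul A.
Proof.
  split.
  - intros Hs [F HF].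
    set (L := fun g => ~ setmul mul F A g \/ A g).
    assert (HL : large mul L).
    { exists (e :: F). intro g. destruct (classic (setmul mul F A g)) as [H|H].
      - destruct H as (f & a & Hf & Ha & ->). exists f, a; split; [right; auto|].
        split; auto. right; auto.
      - exists e, g; split; [left; auto|]. split; [left; auto|].
        rewrite (grp_idl _ _ _ _ HG); auto. }
    apply (thick_not_large_compl mul e inv HG _ HF).
    eapply large_mono; [|apply (Hs L HL)].
    intros x [[H|H] H']; tauto.
  - intros Hpt L [K HK]. apply NNPP; intro Hnl.
    pose proof (not_large_thick_compl mul e inv HG _ Hnl) as T.
    apply Hpt. exists K. intro H.
    destruct (T (flat_map (fun k => map (fun h => mul (inv k) h) (e :: H)) K))
      as (b & Hb & Hf).
    assert (Hc : forall h, In h (e :: H) -> setmul mul K A (mul h b)).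
    { intros h Hh. destruct (HK (mul h b)) as (k & l & Hk & Hl & Heq).
      exists k, l. split; auto. split; auto.
      assert (El : l = mul (mul (inv k) h) b).
      { rewrite <- (grp_assoc _ _ _ _ HG), Heq, (cancel_l mul e inv HG); auto. }
      assert (Hin : In (mul (inv k) h) (flat_map (fun k => map (fun h => mul (inv k) h) (e :: H)) K)).
      { apply in_flat_map. exists k; split; auto. apply in_map; auto. }
      specialize (Hf _ Hin). rewrite <- El in Hf. apply NNPP. tauto. }
    exists b. split.
    + specialize (Hc e (or_introl eq_refl)). rewrite (grp_idl _ _ _ _ HG) in Hc; auto.
    + intros f Hf'. apply Hc. right; auto.
Qed.

Definition V {G} (mul : G -> G -> G) (K M : list G) (A : G -> Prop) : Prop :=
  exists a, setmul mul K A a /\ forall f, In f M -> setmul mul K A (mul f a).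

Lemma V_mono {G} (mul : G -> G -> G) K M (A B : G -> Prop) :
  (forall x, A x -> B x) -> V mul K M A -> V mul K M B.
Proof.
  intros H (a & Ha & Hf). exists a. split.
  - eapply setmul_mono; [| |apply Ha]; auto.
  - intros f Hf'. eapply setmul_mono; [| |apply Hf]; auto.
Qed.

Lemma small_char {G} (mul : G -> G -> G) e inv (HG : is_group mul e inv)
  (en : nat -> G) (Hen : forall x, exists n, en n = x) A :
  small mul A <-> forall k, exists m, ~ V mul (Fk en k) (Fk en m) A.
Proof.
  rewrite (small_iff mul e inv HG), (prethick_iff mul en Hen).
  split.
  - intros H k. apply NNPP; intro Hn. apply H. exists k.
    apply (thick_iff mul en Hen). intro m. apply NNPP; intro Hv. apply Hn. exists m. exact Hv.
  - intros H [k Hk]. destruct (H k) as [m Hm]. apply Hm.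
    apply (thick_iff mul en Hen) with (m := m) in Hk. exact Hk.
Qed.

Lemma open_witness {G} (U : (G -> bool) -> Prop) :
  (forall X, U X -> exists (b : bool) W, (forall w, In w W -> X w = b) /\
      forall Y, (forall w, In w W -> Y w = b) -> U Y) -> is_open U.
Proof.
  intros H X HX. destruct (H X HX) as (b & W & HW & HY). destruct b.
  - exists W, []. split; [split; auto; intros _ []|].
    intros Y [HY1 _]. apply HY; auto.
  - exists [], W. split; [split; auto; intros _ []|].
    intros Y [_ HY2]. apply HY; auto.
Qed.

Lemma is_open_ext {G} (U U' : (G -> bool) -> Prop) :
  is_open U -> (forall X, U X <-> U' X) -> is_open U'.
Proof.
  intros H E X HX. apply E in HX. destruct (H X HX) as (Ki & Ko & Hc & HY).
  exists Ki, Ko. split; auto. intros Y HYc. apply E; auto.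
Qed.

Lemma V_open {G} (mul : G -> G -> G) K M (b : bool) :
  is_open (fun X => V mul K M (fun g => X g = b)).
Proof.
  apply open_witness. intros X (a & (f0 & b0 & Hf0 & Hb0 & Ha) & Hall).
  destruct (list_choice (fun f y => X y = b /\ exists f', In f' K /\ mul f a = mul f' y) M)
    as [W [HW HW']].
  { intros f Hf. destruct (Hall f Hf) as (f' & y & Hf' & Hy & Heq). exists y; eauto. }
  exists b, (b0 :: W). split.
  - intros w [<-|Hw]; auto. destruct (HW' w Hw) as (x & _ & Hx & _); auto.
  - intros Y HY. exists a. split.
    + exists f0, b0. split; auto. split; auto. apply HY; left; auto.
    + intros f Hf. destruct (HW f Hf) as (y & Hy & _ & f' & Hf' & Heq).
      exists f', y. split; auto. split; auto. apply HY; right; auto.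
Qed.

Lemma large_closed {G} (mul : G -> G -> G) e inv (HG : is_group mul e inv) (K : list G) :
  is_closed (fun X : G -> bool => forall g, setmul mul K (setof X) g).
Proof.
  unfold is_closed. apply open_witness. intros X HX.
  apply not_all_ex_not in HX as [g Hg].
  exists false, (map (fun f => mul (inv f) g) K). split.
  - intros w Hw. apply in_map_iff in Hw as (f & <- & Hf).
    destruct (X (mul (inv f) g)) eqn:E; auto. exfalso. apply Hg.
    exists f, (mul (inv f) g). split; auto. split; auto.
    rewrite (cancel_r mul e inv HG); auto.
  - intros Y HY HC. destruct (HC g) as (f & l & Hf & Hl & ->).
    specialize (HY (mul (inv f) (mul f l))). rewrite (cancel_l mul e inv HG) in HY.
    unfold setof in Hl. rewrite HY in Hl; [discriminate|].
    apply in_map_iff. exists f; split; auto. rewrite (cancel_l mul e inv HG); auto.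
Qed.

Theorem theorem3p1 (G : Type) (mul : G -> G -> G) (e : G) (inv : G -> G)
  (HG : is_group mul e inv) (Hc : countable G) :
  F_sigma (fun X : G -> bool => large mul (setof X)) /\
  G_delta (fun X : G -> bool => thick mul (setof X)) /\
  G_delta_sigma (fun X : G -> bool => prethick mul (setof X)) /\
  F_sigma_delta (fun X : G -> bool => small mul (setof X)) /\
  F_sigma_delta (fun X : G -> bool => extralarge mul (setof X)).
Proof.
  destruct Hc as [c Hcinj].
  set (en := fun n => epsilon (inhabits e) (fun x => c x = n)).
  assert (Hen : forall x, exists n, en n = x).
  { intro x. exists (c x). apply Hcinj. unfold en.
    apply (epsilon_spec (inhabits e) (fun y => c y = c x)). eauto. }
  split; [|split; [|split; [|split]]].
  - exists (fun k X => forall g, setmul mul (Fk en k) (setof X) g). split.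
    + intro k. apply (large_closed mul e inv HG).
    + intro X. apply (large_iff mul en Hen).
  - exists (fun m X => exists a, setof X a /\ forall f, In f (Fk en m) -> setof X (mul f a)).
    split.
    + intro m. apply open_witness. intros X (a & Ha & Hf).
      exists true, (a :: map (fun f => mul f a) (Fk en m)). split.
      * intros w [<-|Hw]; auto. apply in_map_iff in Hw as (f & <- & Hf'); apply Hf; auto.
      * intros Y HY. exists a. split; [apply HY; left; auto|].
        intros f Hf'. apply HY. right. apply (in_map (fun f => mul f a)); auto.
    + intro X. apply (thick_iff mul en Hen).
  - exists (fun k X => thick mul (setmul mul (Fk en k) (setof X))). split.
    + intro k. exists (fun m X => V mul (Fk en k) (Fk en m) (fun g => X g = true)). split.
      * intro m. apply V_open.
      * intro X. apply (thick_iff mul en Hen).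
    + intro X. apply (prethick_iff mul en Hen).
  - exists (fun k X => exists m, ~ V mul (Fk en k) (Fk en m) (fun g => X g = true)). split.
    + intro k. exists (fun m X => ~ V mul (Fk en k) (Fk en m) (fun g => X g = true)). split.
      * intro m. unfold is_closed. eapply is_open_ext; [apply (V_open mul (Fk en k) (Fk en m) true)|].
        intro X; split; tauto.
      * intro X; tauto.
    + intro X. apply (small_char mul e inv HG en Hen).
  - exists (fun k X => exists m, ~ V mul (Fk en k) (Fk en m) (fun g => X g = false)). split.
    + intro k. exists (fun m X => ~ V mul (Fk en k) (Fk en m) (fun g => X g = false)). split.
      * intro m. unfold is_closed. eapply is_open_ext; [apply (V_open mul (Fk en k) (Fk en m) false)|].
        intro X; split; tauto.
      * intro X; tauto.
    + intro X. unfold extralarge. rewrite (small_char mul e inv HG en Hen).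
      split; intros H k; destruct (H k) as [m Hm]; exists m; intro Hv; apply Hm;
        (eapply V_mono; [|exact Hv]); intros x Hx; unfold setof in *.
      all: destruct (X x); intuition congruence.
Qed.
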